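(* Let $\Gamma$ be a weighted digraph with vertex set $\{1,\dots,n\}$, $n>1$, without loops and with strictly positive arc weights, with Laplacian matrix $L$ and matrices of in-forests $Q_k$. Then each $Q_k$, $k=0,1,\dots$, commutes with every matrix that commutes with $L$; in particular the matrices $Q_k$ commute with $L$, with $Q(\tau)=\sum_{k\ge0}Q_k\tau^k$ for every $\tau$, and with each other.
   Context: $W=(w_{ij})$ is the matrix of arc weights ($w_{ij}>0$ iff there is an arc $i\to j$, else $0$). The Laplacian $L=(\ell_{ij})$: $\ell_{ij}=-w_{ij}$ for $j\ne i$, $\ell_{ii}=\sum_{k\ne i}w_{ik}$. The weight of a subgraph is the product of its arc weights (1 if no arcs); the weight of a set of subgraphs is the sum of their weights (0 for the empty set). A converging tree is a weakly connected digraph with one vertex (the root) of outdegree 0 and all others of outdegree 1; an in-forest is a spanning subgraph of $\Gamma$ whose weak components are converging trees. $Q_k=(q^k_{ij})$ where $q^k_{ij}$ is the total weight of in-forests with $k$ arcs in which $i$ lies in a tree rooted at $j$ (so $Q_k=0$ for large $k$ and the sum defining $Q(\tau)$ is finite). *)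

(* Defs.v *)
From HB Require Import structures.
From mathcomp Require Import all_boot all_order all_algebra.
Set Implicit Arguments. Unset Strict Implicit. Unset Printing Implicit Defensive.
Import Order.TTheory GRing.Theory Num.Theory.
Local Open Scope ring_scope.

Section Forests.
Variables (R : realFieldType) (n : nat).
Implicit Types (W : 'M[R]_n) (F : {set 'I_n * 'I_n}).

Definition laplacian W : 'M[R]_n :=
  \matrix_(i, j) (if i == j then \sum_(k | k != i) W i k else - W i j).

Definition subgraphb W F : bool :=
  [forall e in F, (e.1 != e.2) && (0 < W e.1 e.2)].

Definition outdeg F (x : 'I_n) : nat := #|[set y | (x, y) \in F]|.

Definition undir F : rel 'I_n := fun x y => ((x, y) \in F) || ((y, x) \in F).

Definition wcomp F (x : 'I_n) : {set 'I_n} := [set y | connect (undir F) x y].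

(* converging tree: one vertex (root) of outdegree 0, all others of
   outdegree 1 (weak connectivity of a weak component is automatic). *)
Definition converging_tree_on F (C : {set 'I_n}) : bool :=
  (#|[set y in C | outdeg F y == 0%N]| == 1%N) &&
  [forall y in C, (outdeg F y == 0%N) || (outdeg F y == 1%N)].

Definition in_forest W F : bool :=
  subgraphb W F && [forall x, converging_tree_on F (wcomp F x)].

Definition weight W F : R := \prod_(e in F) W e.1 e.2.

Definition Qk W (k : nat) : 'M[R]_n :=
  \matrix_(i, j) \sum_(F : {set 'I_n * 'I_n} |
       [&& in_forest W F, #|F| == k, j \in wcomp F i & outdeg F j == 0%N])
     weight W F.

(* Q(tau) = sum_{k >= 0} Q_k tau^k; any subgraph has at most #|'I_n * 'I_n|
   arcs, so Q_k = 0 for k > #|'I_n * 'I_n| and this finite sum is the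
   whole series. *)
Definition Qtau W (tau : R) : 'M[R]_n :=
  \sum_(k < #|{: 'I_n * 'I_n}|.+1) (tau ^+ k) *: Qk W k.

End Forests.

(* Main.v *)
Require Import Defs.
From HB Require Import structures.
From mathcomp Require Import all_boot all_order all_algebra.
Import Order.TTheory GRing.Theory Num.Theory.

Set Implicit Arguments. Unset Strict Implicit. Unset Printing Implicit Defensive.


Definition acyc (T : finType) (f : T -> T) : bool :=
  [forall x, [exists r, fconnect f x r && (f r == r)]].
Definition rt (T : finType) (f : T -> T) (x : T) : T :=
  odflt x [pick r | fconnect f x r && (f r == r)].
Definition upd (T : finType) (f : T -> T) (a b : T) : {ffun T -> T} :=
  [ffun x => if x == a then b else f x].

Lemma iter_fix (T : Type) (f : T -> T) r k : f r = r -> iter k f r = r.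
Proof. by move=> fr; elim: k => //= k ->. Qed.

Lemma root_uniq (T : Type) (f : T -> T) x a b :
  f (iter a f x) = iter a f x -> f (iter b f x) = iter b f x ->
  iter a f x = iter b f x.
Proof.
wlog ab : a b / a <= b.
  move=> H fa fb; case: (leqP a b) => [ab|/ltnW ba]; first exact: H.
  by rewrite (H _ _ ba).
move=> fa fb; by rewrite -(subnK ab) iterD (iter_fix (b - a) fa).
Qed.

Lemma rt_eq (T : finType) (f : T -> T) x k :
  f (iter k f x) = iter k f x -> rt f x = iter k f x.
Proof.
move=> fk; rewrite /rt; case: pickP => [r /andP[/iter_findex <- /eqP fr]|].
  exact: root_uniq.
by move/(_ (iter k f x)); rewrite fconnect_iter fk eqxx.
Qed.

Lemma acycP (T : finType) (f : T -> T) :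
  reflect (forall x, exists k, f (iter k f x) = iter k f x) (acyc f).
Proof.
apply: (iffP forallP) => H x.
  have /existsP[r /andP[/iter_findex Hr /eqP fr]] := H x.
  by exists (findex f x r); rewrite Hr.
have [k Hk] := H x; apply/existsP; exists (iter k f x).
by rewrite fconnect_iter Hk eqxx.
Qed.

Lemma rt_spec (T : finType) (f : T -> T) x :
  acyc f -> exists k, rt f x = iter k f x /\ f (rt f x) = rt f x.
Proof.
move=> /acycP /(_ x) [k Hk]; exists k; rewrite (rt_eq Hk); split=> //.
Qed.

Lemma rt_root (T : finType) (f : T -> T) x : acyc f -> f (rt f x) = rt f x.
Proof. by move=> /(rt_spec x) [k []]. Qed.

Lemma rt_fix (T : finType) (f : T -> T) x : f x = x -> rt f x = x.
Proof. by move=> fx; apply: (@rt_eq _ _ _ 0). Qed.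

Lemma rt_rt (T : finType) (f : T -> T) x : acyc f -> rt f (rt f x) = rt f x.
Proof. by move=> a; apply: rt_fix; apply: rt_root. Qed.

Lemma rt_step (T : finType) (f : T -> T) x : acyc f -> rt f (f x) = rt f x.
Proof.
move=> /(rt_spec x) [k [Hk Hr]].
have e : iter k f (f x) = rt f x by rewrite -iterSr iterS -Hk Hr.
by rewrite -e; apply: rt_eq; rewrite e Hr.
Qed.

Lemma updE (T : finType) (f : T -> T) a b x :
  upd f a b x = if x == a then b else f x.
Proof. by rewrite ffunE. Qed.

Lemma iter_upd (T : finType) (f : T -> T) a b x k :
  (forall k', k' < k -> iter k' f x != a) -> iter k (upd f a b) x = iter k f x.
Proof.
elim: k => //= k IH H; rewrite IH; last by move=> k' lt; apply: H; rewrite ltnS ltnW.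
by rewrite updE (negbTE (H k _)).
Qed.

Lemma iter_upd' (T : finType) (f : T -> T) a b x k :
  (forall k', k' < k -> iter k' (upd f a b) x != a) -> iter k (upd f a b) x = iter k f x.
Proof.
elim: k => //= k IH H; rewrite updE (negbTE (H k _)) // IH //.
by move=> k' lt; apply: H; rewrite ltnS ltnW.
Qed.

Lemma no_cycle (T : finType) (f : T -> T) i k :
  acyc f -> f i != i -> iter k.+1 f i != i.
Proof.
move=> a fi; apply/negP => /eqP Hc.
have [K [HK Hr]] := rt_spec i a.
have per t : iter (t * k.+1) f i = i.
  by elim: t => [|t IH]; rewrite ?mul0n // mulSn iterD IH Hc.
have : iter (K * k.+1) f i = rt f i.
  have le : K <= K * k.+1 by rewrite leq_pmulr.
  by rewrite -(subnK le) iterD -HK iter_fix.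
by rewrite per => ei; move: fi; rewrite ei Hr eqxx.
Qed.

Lemma first_hit (T : finType) (f : T -> T) x a K :
  iter K f x = a -> exists K0, iter K0 f x = a /\ forall k', k' < K0 -> iter k' f x != a.
Proof.
move=> HK.
have ex : exists k, iter k f x == a by exists K; rewrite HK.
case: (ex_minnP ex) => K0 /eqP H0 Hmin; exists K0; split=> // k' lt.
by apply/negP => /Hmin; rewrite leqNgt lt.
Qed.

Lemma add_acyc (T : finType) (f : T -> T) i m :
  acyc f -> f i = i -> rt f m != i ->
  acyc (upd f i m) /\
  forall x, rt (upd f i m) x = if rt f x == i then rt f m else rt f x.
Proof.
move=> a fi rm.
have case1 x : rt f x != i -> exists k, iter k (upd f i m) x = rt f x.
  move=> rx; have [K [HK Hr]] := rt_spec x a.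
  exists K; rewrite iter_upd ?HK // => k' lt; apply/negP => /eqP e.
  move: rx; rewrite HK -(subnK (ltnW lt)) iterD e iter_fix // eqxx //.
have rootP x : rt f x != i -> upd f i m (rt f x) = rt f x.
  by move=> rx; rewrite updE (negbTE rx) rt_root.
have key x : exists k, iter k (upd f i m) x = (if rt f x == i then rt f m else rt f x).
  case: ifP => [/eqP rx | /negbT rx]; last exact: case1.
  have [K [HK _]] := rt_spec x a.
  have [K0 [H0 Hm]] := first_hit (esym (etrans (esym rx) HK)).
  have [k1 Hk1] := case1 m rm.
  exists (k1 + K0.+1); by rewrite iterD iterS (@iter_upd _ f i m x K0 Hm) H0 updE eqxx.
have ac : acyc (upd f i m).
  apply/acycP => x; have [k Hk] := key x; exists k; rewrite Hk.
  by case: ifP => [_|/negbT]; apply: rootP.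
split=> // x; have [k Hk] := key x; rewrite -Hk; apply: rt_eq; rewrite Hk.
by case: ifP => [_|/negbT]; apply: rootP.
Qed.

Lemma rem_acyc (T : finType) (f : T -> T) i :
  acyc f -> f i != i -> acyc (upd f i i) /\ rt (upd f i i) (f i) != i.
Proof.
move=> a fi.
have ac : acyc (upd f i i).
  apply/acycP => x; have [K [HK Hr]] := rt_spec x a.
  have [hit|nohit] := boolP [exists k : 'I_K.+1, iter k f x == i].
    case/existsP: hit => k /eqP Hk; have [K0 [H0 Hm]] := first_hit Hk.
    by exists K0; rewrite iter_upd // H0 updE eqxx.
  exists K; rewrite iter_upd; last first.
    move=> k' lt; apply/negP => e; move/negP: nohit; apply.
    by apply/existsP; exists (Ordinal (ltn_trans lt (ltnSn K))).
  rewrite updE -HK Hr; case: ifP => // /eqP e.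
  have : [exists k : 'I_K.+1, iter k f x == i].
    by apply/existsP; exists ord_max; rewrite /= -HK e.
  by rewrite (negbTE nohit).
split=> //; apply/negP => /eqP e.
have [K [HK _]] := rt_spec (f i) ac.
have [K0 [H0 Hm]] := first_hit (esym (etrans (esym e) HK)).
move: H0; rewrite iter_upd' // -iterSr => /eqP; apply/negP; exact: no_cycle.
Qed.

Lemma upd_upd (T : finType) (f : T -> T) i a b :
  upd (upd f i a) i b = upd f i b.
Proof. by apply/ffunP => x; rewrite !updE; case: (x == i). Qed.

Lemma upd_id (T : finType) (f : {ffun T -> T}) i : upd f i (f i) = f.
Proof. by apply/ffunP => x; rewrite updE; case: eqP => // ->. Qed.

Lemma upd_same (T : finType) (f : {ffun T -> T}) i : f i = i -> upd f i i = f.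
Proof. by move=> fi; rewrite -{2}fi upd_id. Qed.


Definition graph n (g : {ffun 'I_n -> 'I_n}) : {set 'I_n * 'I_n} :=
  [set e | (g e.1 == e.2) && (e.1 != e.2)].
Definition par n (F : {set 'I_n * 'I_n}) (x : 'I_n) : 'I_n :=
  odflt x [pick y | (x, y) \in F].
Definition sf n (F : {set 'I_n * 'I_n}) : bool :=
  [forall e in F, e.1 != e.2] && [forall x, converging_tree_on F (wcomp F x)].
Definition sz (T : finType) (g : {ffun T -> T}) : nat := #|[set x | g x != x]|.

Lemma connect_inv (T : finType) (U : eqType) (e : rel T) (h : T -> U) x y :
  (forall a b, e a b -> h a = h b) -> connect e x y -> h x = h y.
Proof.
move=> He /connectP [p Hp ->]; elim: p x Hp => //= z p IH x /andP [exz Hp].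
by rewrite (He _ _ exz) (IH _ Hp).
Qed.

Lemma outdeg_graph n (g : {ffun 'I_n -> 'I_n}) x :
  outdeg (graph g) x = (g x != x).
Proof.
rewrite /outdeg; case: eqP => [gx|/eqP gx] /=.
  apply/eqP; rewrite cards_eq0; apply/eqP/setP => y; rewrite !inE /=.
  by rewrite gx; case: (x == y).
have -> : [set y | (x, y) \in graph g] = [set g x].
  apply/setP => y; rewrite !inE /= [y == _]eq_sym; case: eqP => // <-; by rewrite eq_sym.
by rewrite cards1.
Qed.

Lemma graph_edge n (g : {ffun 'I_n -> 'I_n}) a b :
  undir (graph g) a b -> g a = b \/ g b = a.
Proof. by rewrite /undir !inE /= => /orP [/andP [/eqP -> _]|/andP [/eqP -> _]]; [left|right]. Qed.

Lemma connect_graph_rt n (g : {ffun 'I_n -> 'I_n}) x y :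
  acyc g -> connect (undir (graph g)) x y -> rt g x = rt g y.
Proof.
move=> a; apply: connect_inv => u v /graph_edge [<-|<-]; by rewrite rt_step.
Qed.

Lemma connect_to_rt n (g : {ffun 'I_n -> 'I_n}) x :
  acyc g -> connect (undir (graph g)) x (rt g x).
Proof.
move=> a; have [k [-> _]] := rt_spec x a.
elim: k => [|k IH]; first exact: connect0.
apply: (connect_trans IH); rewrite iterS; set z := iter k g x.
case: (eqVneq (g z) z) => [->|ne]; first exact: connect0.
by apply: connect1; rewrite /undir !inE /= eqxx eq_sym ne.
Qed.

Lemma reach_graph n (g : {ffun 'I_n -> 'I_n}) i j :
  acyc g -> (j \in wcomp (graph g) i) && (outdeg (graph g) j == 0%N) = (rt g i == j).
Proof.
move=> a; rewrite outdeg_graph inE; apply/andP/eqP.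
  case=> /(connect_graph_rt a) ->; rewrite eqb0 negbK => /eqP gj.
  exact: rt_fix.
move=> <-; rewrite connect_to_rt // rt_root //.
by rewrite eqxx.
Qed.

Lemma sf_graph n (g : {ffun 'I_n -> 'I_n}) : acyc g -> sf (graph g).
Proof.
move=> a; apply/andP; split.
  by apply/forall_inP => e; rewrite inE => /andP [].
apply/forallP => x; apply/andP; split.
  have -> : [set y in wcomp (graph g) x | outdeg (graph g) y == 0%N] = [set rt g x].
    by apply/setP => y; rewrite in_set reach_graph // inE eq_sym.
  by rewrite cards1.
by apply/forall_inP => y _; rewrite outdeg_graph; case: (g y != y).
Qed.

Lemma par_graph n (g : {ffun 'I_n -> 'I_n}) x : par (graph g) x = g x.
Proof.
rewrite /par; case: pickP => [y|H] /=.
  by rewrite inE /= => /andP [/eqP].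
case: (eqVneq (g x) x) => // ne.
by move: (H (g x)); rewrite inE /= eqxx eq_sym ne.
Qed.

Lemma Rb_step (T : finType) (f : T -> T) a :
  [exists r, fconnect f a r && (f r == r)] = [exists r, fconnect f (f a) r && (f r == r)].
Proof.
apply/existsP/existsP => [[r /andP [Hc Hr]]|[r /andP [Hc Hr]]].
  case: (eqVneq (f a) a) => [->|ne]; first by exists r; rewrite Hc.
  exists r; rewrite Hr andbT.
  move/iter_findex: Hc; case: (findex f a r) => [/= e|k].
    by move: ne; rewrite e (eqP Hr) eqxx.
  by rewrite iterSr => <-; apply: fconnect_iter.
by exists r; rewrite Hr andbT (connect_trans (fconnect1 f a) Hc).
Qed.

Lemma sf_par n (F : {set 'I_n * 'I_n}) :
  sf F -> graph [ffun x => par F x] = F /\ acyc [ffun x => par F x].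
Proof.
case/andP => /forall_inP nl /forallP tr.
have od1 x : (outdeg F x <= 1)%N.
  have /andP [_ /forall_inP H] := tr x.
  have := H x; rewrite inE connect0 => /(_ isT) /orP [/eqP ->|/eqP ->] //.
have parE x y : (x, y) \in F -> par F x = y.
  move=> xy; rewrite /par; case: pickP => [z xz|/(_ y)]; last by rewrite xy.
  have /card_le1_eqP H := od1 x.
  by apply: H; rewrite inE.
have gr : graph [ffun x => par F x] = F.
  apply/setP => [[x y]]; rewrite inE /= ffunE.
  case: (boolP ((x, y) \in F)) => [xy|nxy].
    by rewrite (parE _ _ xy) eqxx (nl _ xy).
  apply/negbTE/negP => /andP [/eqP pxy nxy'].
  move: pxy; rewrite /par; case: pickP => [z xz /= zy|_ /= xy].
    by move: nxy; rewrite -zy xz.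
  by move: nxy'; rewrite xy eqxx.
split=> //; set g := [ffun x => par F x].
apply/forallP => x.
have /andP [/cards1P [y0 Hy0] _] := tr x.
have : y0 \in [set y in wcomp F x | outdeg F y == 0%N] by rewrite Hy0 inE.
rewrite inE => /andP [cxy /eqP od0].
have gy0 : g y0 = y0.
  rewrite /g ffunE /par; case: pickP => [z yz|] //=.
  by have := card0_eq od0 z; rewrite inE yz.
have -> : [exists r, fconnect g x r && (g r == r)] =
          [exists r, fconnect g y0 r && (g r == r)].
  move: cxy; rewrite inE; apply: (connect_inv (h := fun z => [exists r, fconnect g z r && (g r == r)])) => a b.
  rewrite /undir => /orP [ab|ba].
    by rewrite Rb_step /g ffunE (parE _ _ ab).
  by rewrite [in RHS]Rb_step /g ffunE (parE _ _ ba).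
by apply/existsP; exists y0; rewrite connect0 gy0 eqxx.
Qed.

Local Open Scope ring_scope.

Definition wt (R : realFieldType) n (W : 'M[R]_n) (g : {ffun 'I_n -> 'I_n}) : R :=
  \prod_(x | g x != x) W x (g x).

Lemma sz_upd (T : finType) (g : {ffun T -> T}) i m :
  g i = i -> m != i -> sz (upd g i m) = (sz g).+1.
Proof.
move=> gi mi; rewrite /sz.
have -> : [set x | upd g i m x != x] = i |: [set x | g x != x].
  apply/setP => x; rewrite !inE updE; case: (eqVneq x i) => [->|xi]; by rewrite ?eqxx ?gi ?mi.
by rewrite cardsU1 inE gi eqxx.
Qed.

Lemma wt_upd (R : realFieldType) n (W : 'M[R]_n) (g : {ffun 'I_n -> 'I_n}) i m :
  g i = i -> m != i -> wt W (upd g i m) = W i m * wt W g.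
Proof.
move=> gi mi; rewrite /wt (bigD1 i) /=; last by rewrite updE eqxx.
rewrite updE eqxx; congr (_ * _); apply: eq_big => x.
  by rewrite updE; case: (eqVneq x i) => [->|xi]; rewrite ?gi ?eqxx ?andbF ?xi ?andbT.
by move=> /andP [_ xi]; rewrite updE (negbTE xi).
Qed.

Lemma graph_im n (g : {ffun 'I_n -> 'I_n}) :
  graph g = [set (x, g x) | x in [set x | g x != x]].
Proof.
apply/setP => [[x y]]; rewrite inE /=; apply/andP/imsetP => [[/eqP <- ne]|[z]].
  by exists x; rewrite // inE eq_sym.
by rewrite inE => zn [-> ->]; rewrite eqxx eq_sym.
Qed.

Lemma card_graph n (g : {ffun 'I_n -> 'I_n}) : #|graph g| = sz g.
Proof. by rewrite graph_im card_imset // => a b /(congr1 fst). Qed.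

Lemma weight_graph (R : realFieldType) n (W : 'M[R]_n) (g : {ffun 'I_n -> 'I_n}) :
  weight W (graph g) = wt W g.
Proof.
rewrite /weight graph_im big_imset /=; last by move=> a b _ _ /(congr1 fst).
by apply: eq_bigl => x; rewrite inE.
Qed.

Lemma Qk_eq (R : realFieldType) n (W : 'M[R]_n) k i j :
  (forall a b, 0 <= W a b) ->
  Qk W k i j = \sum_(g : {ffun 'I_n -> 'I_n} | acyc g && (sz g == k) && (rt g i == j)) wt W g.
Proof.
move=> hnn; rewrite mxE.
transitivity (\sum_(F | [&& sf F, #|F| == k, j \in wcomp F i & outdeg F j == 0%N]) weight W F).
  rewrite big_mkcond [RHS]big_mkcond; apply: eq_bigr => F _.
  case: (boolP (in_forest W F)) => inF.
    have sfF : sf F.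
      move: inF; rewrite /in_forest /sf /subgraphb => /andP [/forall_inP H ->].
      by rewrite andbT; apply/forall_inP => e /H /andP [].
    by rewrite sfF.
  case: (boolP (sf F)) => sfF //=; case: ifP => // _.
  move: inF sfF; rewrite /in_forest /sf => /nandP [nsub|ntr] /andP [nl tr];
    last by rewrite tr in ntr.
  case/forall_inPn: nsub => e eF; rewrite negb_and (forall_inP nl _ eF) /= => npos.
  have We : W e.1 e.2 = 0.
    by have := hnn e.1 e.2; rewrite le_eqVlt (negbTE npos) orbF => /eqP <-.
  by rewrite /weight (bigD1 e) //= We mul0r.
rewrite (reindex_onto (@graph n) (fun F => [ffun x => par F x])) /=; last first.
  by move=> F /and4P [sfF _ _ _]; case: (sf_par sfF).
apply: eq_big => g; last by move=> _; rewrite weight_graph.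
have -> : [ffun x => par (graph g) x] = g by apply/ffunP => x; rewrite ffunE par_graph.
rewrite eqxx andbT; case: (boolP (acyc g)) => a.
  by rewrite sf_graph // card_graph -reach_graph //.
case: (boolP (sf (graph g))) => // sfg; case: (sf_par sfg) => _.
have -> : [ffun x => par (graph g) x] = g by apply/ffunP => x; rewrite ffunE par_graph.
by rewrite (negbTE a).
Qed.


Lemma sum_bij (R : realFieldType) (I J : finType) (P : pred I) (Q : pred J)
  (f : I -> R) (g : J -> R) (h : I -> J) (h' : J -> I) :
  (forall x, P x -> [/\ Q (h x), h' (h x) = x & g (h x) = f x]) ->
  (forall y, Q y -> P (h' y) /\ h (h' y) = y) ->
  \sum_(x | P x) f x = \sum_(y | Q y) g y.
Proof.
move=> H1 H2; rewrite [RHS](reindex_onto h h'); last by move=> y /H2 [].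
apply: eq_big => x.
  apply/idP/andP => [Px|[Qhx /eqP e]].
    by case: (H1 x Px) => -> -> _.
  by have [] := H2 _ Qhx; rewrite e.
move=> Px; by case: (H1 x Px).
Qed.

Lemma decomp (T : finType) (g : {ffun T -> T}) i : acyc g -> g i != i ->
  [/\ acyc (upd g i i), upd g i i i = i, rt (upd g i i) (g i) != i,
      upd (upd g i i) i (g i) = g &
      forall x, rt g x = if rt (upd g i i) x == i then rt (upd g i i) (g i)
                         else rt (upd g i i) x].
Proof.
move=> a gi; have [a0 r0] := rem_acyc a gi.
have g0i : upd g i i i = i by rewrite updE eqxx.
have e : upd (upd g i i) i (g i) = g by rewrite upd_upd upd_id.
split=> // x; have [_ H] := add_acyc a0 g0i r0.
by rewrite -H e.
Qed.

Lemma to_pair (R : realFieldType) n (W : 'M[R]_n) i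
   (P : 'I_n -> pred {ffun 'I_n -> 'I_n}) :
  \sum_m W i m * (\sum_(g | P m g) wt W g) =
  \sum_(p : 'I_n * {ffun 'I_n -> 'I_n} | P p.1 p.2) W i p.1 * wt W p.2.
Proof.
under eq_bigr do rewrite mulr_sumr.
by rewrite pair_big_dep.
Qed.

Definition qq (R : realFieldType) n (W : 'M[R]_n) k i j :=
  \sum_(g : {ffun 'I_n -> 'I_n} | acyc g && (sz g == k) && (rt g i == j)) wt W g.
Definition sig (R : realFieldType) n (W : 'M[R]_n) k :=
  \sum_(g : {ffun 'I_n -> 'I_n} | acyc g && (sz g == k)) wt W g.

Lemma key_identity (R : realFieldType) n (W : 'M[R]_n) k i j :
  \sum_m W i m * qq W k i j + qq W k.+1 i j =
  \sum_m W i m * qq W k m j + (i == j)%:R * sig W k.+1.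
Proof.
rewrite /qq (to_pair W i (fun m g => acyc g && (sz g == k) && (rt g i == j))).
rewrite (to_pair W i (fun m g => acyc g && (sz g == k) && (rt g m == j))) /=.
case: (eqVneq i j) => [<-|ij].
-
  rewrite mul1r (bigID (fun p : 'I_n * {ffun 'I_n -> 'I_n} => rt p.2 p.1 == i)) /=.
  rewrite /sig [in RHS](bigID (fun g : {ffun 'I_n -> 'I_n} => rt g i == i)) /=.
  rewrite -addrA; congr (_ + _).
    apply: eq_bigl => -[m g] /=.
    case: (boolP (acyc g)) => a //=; case: (eqVneq (rt g m) i) => [e|]; last by rewrite !andbF.
    by move: (rt_rt m a); rewrite e => ->; rewrite eqxx !andbT.
  rewrite addrC; congr (_ + _).
  apply: (sum_bij (h := fun p : 'I_n * {ffun 'I_n -> 'I_n} => upd p.2 i p.1) (h' := fun g => (g i, upd g i i))).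
    move=> [m g] /= /andP [/andP [/andP [a /eqP sk] /eqP ri] rm].
    have gi : g i = i by rewrite -{1}ri rt_root // ri.
    have mi : m != i by apply/eqP => e; move: rm; rewrite e ri eqxx.
    have [a' H] := add_acyc a gi (rm : rt g m != i).
    rewrite a' sz_upd // sk eqxx H ri eqxx rm updE eqxx upd_upd upd_same //.
    by rewrite wt_upd.
  move=> g /andP [/andP [a /eqP sk] ri].
  have gi : g i != i by apply/eqP => e; move: ri; rewrite (rt_fix e) eqxx.
  have [a0 g0i r0 e H] := decomp a gi.
  rewrite /= e; split=> //.
  have sk' : sz (upd g i i) = k.
    by have := sz_upd g0i gi; rewrite e sk => -[].
  by rewrite a0 sk' eqxx rt_fix // eqxx r0.
-
  rewrite mul0r addr0 [RHS](bigID (fun p : 'I_n * {ffun 'I_n -> 'I_n} => p.2 i == i)) /= addrC; congr (_ + _); last first.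
    symmetry; apply: (sum_bij (h := fun p : 'I_n * {ffun 'I_n -> 'I_n} => upd p.2 i p.1) (h' := fun g => (g i, upd g i i))).
      move=> [m g] /= /andP [/andP [/andP [a /eqP sk] /eqP rm] /eqP gi].
      have rmi : rt g m != i by rewrite rm eq_sym.
      have mi : m != i by apply/eqP => e; move: rmi; rewrite e (rt_fix gi) eqxx.
      have [a' H] := add_acyc a gi rmi.
      rewrite a' sz_upd // sk eqxx H rt_fix // eqxx rm eqxx updE eqxx upd_upd upd_same //.
      by rewrite wt_upd.
    move=> g /andP [/andP [a /eqP sk] /eqP ri].
    have gi : g i != i by apply/eqP => e; move: ij; rewrite -ri (rt_fix e) eqxx.
    have [a0 g0i r0 e H] := decomp a gi.
    rewrite /= e; split=> //.
    have sk' : sz (upd g i i) = k.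
      by have := sz_upd g0i gi; rewrite e sk => -[].
    rewrite a0 sk' eqxx g0i eqxx andbT /=.
    by rewrite -ri H (rt_fix g0i) eqxx.
  rewrite (bigID (fun p : 'I_n * {ffun 'I_n -> 'I_n} => rt (upd p.2 i i) p.1 == i)) /=.
  rewrite [RHS](bigID (fun p : 'I_n * {ffun 'I_n -> 'I_n} => rt (upd p.2 i i) p.1 == i)) /=.
  congr (_ + _).
    apply: eq_bigl => -[m g] /=.
    case: (boolP (acyc g)) => a //=.
    case: (eqVneq (g i) i) => [gi|gi].
      by rewrite (rt_fix gi) (negbTE ij) /= !andbF.
    have [a0 g0i r0 e H] := decomp a gi.
    case: (eqVneq (rt (upd g i i) m) i) => [c|c]; last by rewrite !andbF.
    by rewrite !andbT !H c rt_fix // eqxx.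
  apply: (sum_bij (h := fun p : 'I_n * {ffun 'I_n -> 'I_n} => (p.2 i, upd p.2 i p.1)) (h' := fun p : 'I_n * {ffun 'I_n -> 'I_n} => (p.2 i, upd p.2 i p.1))).
    move=> [m g] /= /andP [/andP [/andP [a /eqP sk] /eqP ri] c].
    have gi : g i != i by apply/eqP => e; move: ij; rewrite -ri (rt_fix e) eqxx.
    have [a0 g0i r0 e H] := decomp a gi.
    have mi : m != i by apply/eqP => e1; move: c; rewrite e1 (rt_fix g0i) eqxx.
    have e2 : upd g i m = upd (upd g i i) i m by rewrite upd_upd.
    have [a' H'] := add_acyc a0 g0i c.
    have sg : sz g = (sz (upd g i i)).+1 by have := sz_upd g0i gi; rewrite e.
    have wg : wt W g = W i (g i) * wt W (upd g i i) by rewrite -{1}e wt_upd.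
    have g'i : upd g i m i = m by rewrite updE eqxx.
    have g'0 : upd (upd g i m) i i = upd g i i by rewrite upd_upd.
    have hh : upd (upd g i m) i (g i) = g by rewrite upd_upd upd_id.
    have ac' : acyc (upd g i m) by rewrite e2.
    have sz' : sz (upd g i m) = k by rewrite e2 sz_upd // -sg.
    have rt' : rt (upd g i m) (g i) = j.
      by rewrite e2 H' (negbTE r0) -ri H (rt_fix g0i) eqxx.
    rewrite ac' sz' rt' g'i g'0 mi r0 !eqxx hh; split=> //.
    by rewrite e2 wt_upd // wg mulrCA.
  move=> [m g] /= /andP [/andP [/andP [/andP [a /eqP sk] /eqP rm] gi] c].
  have [a0 g0i r0 e H] := decomp a gi.
  have mi : m != i by apply/eqP => e1; move: c; rewrite e1 (rt_fix g0i) eqxx.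
  have e2 : upd g i m = upd (upd g i i) i m by rewrite upd_upd.
  have [a' H'] := add_acyc a0 g0i c.
  have sg : sz g = (sz (upd g i i)).+1 by have := sz_upd g0i gi; rewrite e.
  have g'i : upd g i m i = m by rewrite updE eqxx.
  have g'0 : upd (upd g i m) i i = upd g i i by rewrite upd_upd.
  have hh : upd (upd g i m) i (g i) = g by rewrite upd_upd upd_id.
  have ac' : acyc (upd g i m) by rewrite e2.
  have sz' : sz (upd g i m) = k by rewrite e2 sz_upd // -sg.
  have rt' : rt (upd g i m) i = j.
    by rewrite e2 H' (rt_fix g0i) eqxx -rm H (negbTE c).
  by rewrite ac' sz' rt' g'i g'0 r0 !eqxx hh.
Qed.


Lemma sz0 (T : finType) (g : {ffun T -> T}) : (sz g == 0%N) = (g == [ffun x => x]).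
Proof.
rewrite /sz cards_eq0; apply/eqP/eqP => [H|->].
  apply/ffunP => x; rewrite ffunE; apply/eqP.
  have : x \notin [set x | g x != x] by rewrite H inE.
  by rewrite inE negbK.
by apply/setP => x; rewrite !inE ffunE eqxx.
Qed.

Lemma Q0 (R : realFieldType) n (W : 'M[R]_n) :
  (forall a b, 0 <= W a b) -> Qk W 0 = 1%:M.
Proof.
move=> hnn; apply/matrixP => i j; rewrite Qk_eq // mxE.
have aid : acyc ([ffun x => x] : {ffun 'I_n -> 'I_n}).
  by apply/acycP => x; exists 0%N; rewrite ffunE.
have rid : rt ([ffun x => x] : {ffun 'I_n -> 'I_n}) i = i by apply: rt_fix; rewrite ffunE.
case: (eqVneq i j) => [<-|ij].
  have E : forall g : {ffun 'I_n -> 'I_n},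
      acyc g && (sz g == 0%N) && (rt g i == i) = (g == [ffun x => x]).
    move=> g; rewrite sz0; case: eqP => [->|]; by rewrite ?andbF // aid rid eqxx.
  rewrite (eq_bigl _ _ E) big_pred1_eq /wt big_pred0 //= => x.
  by rewrite ffunE eqxx.
rewrite big_pred0 // => g; rewrite sz0; case: eqP => [->|]; by rewrite ?andbF ?rid ?(negbTE ij) ?andbF.
Qed.

Lemma lap_mul (R : realFieldType) n (W : 'M[R]_n) (X : 'I_n -> R) i :
  (forall a, W a a = 0) ->
  \sum_m laplacian W i m * X m = (\sum_m W i m) * X i - \sum_m W i m * X m.
Proof.
move=> hl; rewrite (bigD1 i) //= [in X in _ = _ - X](bigD1 i) //= hl mul0r add0r.
rewrite [\sum_m W i m](bigD1 i) //= hl add0r mxE eqxx; congr (_ + _).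
rewrite -sumrN; apply: eq_bigr => m mi; rewrite mxE eq_sym (negbTE mi) mulNr //.
Qed.

Lemma Qrec (R : realFieldType) n (W : 'M[R]_n) k :
  (forall a, W a a = 0) -> (forall a b, 0 <= W a b) ->
  Qk W k.+1 = (sig W k.+1)%:M - laplacian W *m Qk W k.
Proof.
move=> hl hnn; apply/matrixP => i j; rewrite Qk_eq //.
have HQ m : Qk W k m j = qq W k m j by rewrite Qk_eq.
move: HQ; generalize (Qk W k) => Q HQ.
have HL := lap_mul (fun m => Q m j) i hl.
move: HL; generalize (laplacian W) => L HL.
rewrite !mxE HL.
have K := key_identity W k i j.
apply: (addrI (\sum_m W i m * qq W k i j)); rewrite K.
have HX : \sum_m W i m * Q m j = \sum_m W i m * qq W k m j by apply: eq_bigr => m _; rewrite HQ.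
rewrite HX.
rewrite HQ mulr_suml mulr_natl.
set X := \sum_m W i m * qq W k m j; set Y := \sum_m W i m * qq W k i j.
set S := _ *+ _.
by rewrite opprB addrCA [Y + _]addrC subrK addrC.
Qed.

Unset Implicit Arguments.
Theorem corollary3 (R : realFieldType) (n : nat) (W : 'M[R]_n)
    (hn : (1 < n)%N)
    (hloop : forall i, W i i = 0)
    (hnonneg : forall i j, 0 <= W i j) :
  (forall (k : nat) (M : 'M[R]_n),
      laplacian W *m M = M *m laplacian W -> Qk W k *m M = M *m Qk W k) /\
  (forall k : nat, Qk W k *m laplacian W = laplacian W *m Qk W k) /\
  (forall (k : nat) (tau : R), Qk W k *m Qtau W tau = Qtau W tau *m Qk W k) /\
  (forall k l : nat, Qk W k *m Qk W l = Qk W l *m Qk W k).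
Proof.
have P1 : forall (k : nat) (M : 'M[R]_n),
    laplacian W *m M = M *m laplacian W -> Qk W k *m M = M *m Qk W k.
  move=> k M LM; elim: k => [|k IH].
    by rewrite Q0 // mul1mx mulmx1.
  rewrite Qrec // mulmxBl mulmxBr mul_scalar_mx mul_mx_scalar.
  by rewrite -mulmxA IH mulmxA LM -mulmxA.
have P2 : forall k : nat, Qk W k *m laplacian W = laplacian W *m Qk W k.
  by move=> k; apply: P1.
split=> //; split=> //; split.
  move=> k tau; apply: P1.
  rewrite /Qtau mulmx_sumr mulmx_suml; apply: eq_bigr => l _.
  by rewrite -scalemxAr -scalemxAl P2.
by move=> k l; apply: P1; rewrite P2.
Qed.
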